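(* Let $\Sigma$ be a finite alphabet and let $L\subseteq\Sigma^*$ be the language of unique Eulerian trails. Let $L''\subseteq\Sigma^*$ be the set of words $r$ of one of the two forms (a) $r=axbzayb$ with $a,b\in\Sigma$, $a\neq b$, $x,y,z\in\Sigma^*$, or (b) $r=axaya$ with $a\in\Sigma$, $x,y\in\Sigma^*$ (and $z=\epsilon$ in the conditions below), satisfying: (1) $x\neq\epsilon$ or $y\neq\epsilon$; (2) $x,y,z\in L$; (3) none of $x,y,z$ contains the letter $a$ or the letter $b$, and no two of $x,y,z$ contain a common letter. Then $L''$ equals the set of minimal forbidden words of $L$.
   Context: For a word $t=t_1\cdots t_n$ over $\Sigma$ (viewed as a vertex set), $G(t)$ is the directed multigraph on $\Sigma$ with one edge $t_i\to t_{i+1}$ for each $1\le i<n$; a word $s=s_1\cdots s_k$ is an Eulerian trail of $G(t)$ if the multiset of pairs $\{(s_i,s_{i+1}):1\le i<k\}$ equals the multiset $\{(t_i,t_{i+1}):1\le i<n\}$. The language $L$ consists of the empty word $\epsilon$ together with all nonempty words $t$ such that no word $s\neq t$ with $s_1=t_1$ is an Eulerian trail of $G(t)$. A word $r$ is a minimal forbidden word of $L$ if $r\notin L$ while every proper factor (contiguous subword) of $r$ belongs to $L$. *)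

(* Defs.v *)
From mathcomp Require Import all_boot.
Set Implicit Arguments. Unset Strict Implicit. Unset Printing Implicit Defensive.

Definition edges (T : eqType) (t : seq T) : seq (T * T) := zip t (behead t).

Definition eulerian_trail (T : eqType) (s t : seq T) : Prop :=
  perm_eq (edges s) (edges t).

Definition inL (T : eqType) (t : seq T) : Prop :=
  t = [::] \/
  (t <> [::] /\
   forall s : seq T, s <> [::] -> ohead s = ohead t ->
     eulerian_trail s t -> s = t).

Definition min_forbidden (T : eqType) (r : seq T) : Prop :=
  ~ inL r /\ forall u : seq T, infix u r -> u <> r -> inL u.

Definition disj (T : eqType) (x y : seq T) : Prop := forall c, c \in x -> c \notin y.

Definition inL2 (T : eqType) (r : seq T) : Prop :=
  (exists (a b : T) (x y z : seq T),
      a <> b /\ r = a :: x ++ b :: z ++ a :: y ++ [:: b] /\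
      (x <> [::] \/ y <> [::]) /\
      inL x /\ inL y /\ inL z /\
      a \notin x /\ a \notin y /\ a \notin z /\
      b \notin x /\ b \notin y /\ b \notin z /\
      disj x y /\ disj x z /\ disj y z)
  \/
  (exists (a : T) (x y : seq T),
      r = a :: x ++ a :: y ++ [:: a] /\
      (x <> [::] \/ y <> [::]) /\
      inL x /\ inL y /\
      a \notin x /\ a \notin y /\
      disj x y).

(* Main.v *)
Require Import Defs.
From mathcomp Require Import all_boot zify.
From Stdlib Require Import Classical.
Set Implicit Arguments. Unset Strict Implicit. Unset Printing Implicit Defensive.


Section Basics.
Variable T : eqType.
Implicit Types (s t w X Y Z P Q R M : seq T) (a b c d x y z : T).

Lemma edges_cons2 x y w : edges (x :: y :: w) = (x, y) :: edges (y :: w).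
Proof. by []. Qed.
Lemma edges1 x : edges [:: x] = [::].
Proof. by []. Qed.

Lemma edges_app x m q : edges (x :: m ++ q) = edges (x :: m) ++ edges (last x m :: q).
Proof.
elim: m x => [|y m IH] x; first by [].
by rewrite cat_cons edges_cons2 IH edges_cons2.
Qed.

Lemma edges_split P d R : edges (P ++ d :: R) = edges (P ++ [:: d]) ++ edges (d :: R).
Proof.
case: P => [|x m]; first by [].
rewrite !cat_cons edges_app (edges_app x m [:: d]) edges_cons2 edges_cons2 edges1.
by rewrite -catA.
Qed.

Lemma size_edges s : size (edges s) = (size s).-1.
Proof.
case: s => [|x s] //; rewrite /edges size_zip /=; apply/minn_idPr; exact: leqnSn.
Qed.

Lemma mem_edges u v s : (u,v) \in edges s -> u \in s /\ v \in s.
Proof.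
elim: s => [|x s IH] //; case: s IH => [|y s] IH //.
rewrite edges_cons2 in_cons => /orP[/eqP[-> ->]|/IH[h1 h2]].
  by rewrite !inE !eqxx orbT.
by rewrite !(in_cons x) h1 h2 !orbT.
Qed.

Lemma map_snd_edges x w : map snd (edges (x :: w)) = w.
Proof. by elim: w x => [|y w IH] x; [|rewrite edges_cons2 map_cons IH]. Qed.

Lemma map_fst_edges x w : map fst (edges (x :: w)) = belast x w.
Proof. by elim: w x => [|y w IH] x; [|rewrite edges_cons2 map_cons IH]. Qed.

Lemma edges_src P z u v : (u,v) \in edges (P ++ [:: z]) -> u \in P.
Proof.
case: P => [|x m] //= H.
have : u \in map fst (edges (x :: m ++ [:: z])) by apply/mapP; exists (u,v).
by rewrite map_fst_edges cats1 belast_rcons.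
Qed.

Lemma edges_tgt z P u v : (u,v) \in edges (z :: P) -> v \in P.
Proof.
move=> H; have : v \in map snd (edges (z :: P)) by apply/mapP; exists (u,v).
by rewrite map_snd_edges.
Qed.

Lemma edges_sub_prefix P Q : {subset edges P <= edges (P ++ Q)}.
Proof.
case: P => [|x m] // e He; rewrite cat_cons edges_app mem_cat He //.
Qed.

Lemma edges_sub_suffix P d R : {subset edges (d :: R) <= edges (P ++ d :: R)}.
Proof. by move=> e He; rewrite edges_split mem_cat He orbT. Qed.

Lemma permS x s t : perm_eq (edges (x :: s)) (edges (x :: t)) ->
  perm_eq s t /\ last x s = last x t.
Proof.
move=> H; have Hs := perm_map snd H; rewrite !map_snd_edges in Hs.
have Hf := perm_map fst H; rewrite !map_fst_edges in Hf.
split => //.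
have H2 : perm_eq (x :: s) (x :: t) by rewrite perm_cons.
rewrite !lastI -!cats1 in H2.
have H3 : perm_eq (belast x s ++ [:: last x s]) (belast x s ++ [:: last x t]).
  apply: (perm_trans H2); by rewrite perm_cat2r perm_sym.
rewrite perm_cat2l in H3.
by have := perm_mem H3 (last x s); rewrite !inE eqxx => /esym/eqP.
Qed.

Definition uniqL x t := forall s, perm_eq (edges (x :: s)) (edges (x :: t)) -> s = t.

Lemma inL_cons x t : inL (x :: t) <-> uniqL x t.
Proof.
split.
- case=> // [[_ H]] s Hs; have := H (x :: s) (fun e => ltac:(discriminate)) erefl Hs.
  by case.
- move=> H; right; split => // [[|y s]] // _ [->] Hs; by rewrite (H s Hs).
Qed.

Lemma pre_eq d U V W W' : d \notin U -> d \notin V -> U ++ d :: W = V ++ d :: W' ->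
  U = V /\ W = W'.
Proof.
elim: U V => [|u U IH] [|v V].
- by move=> _ _ [->].
- by move=> _ H [E]; rewrite E in_cons eqxx in H.
- by move=> H _ [E]; rewrite -E in_cons eqxx in H.
- rewrite !in_cons => /norP[_ hU] /norP[_ hV] [-> /(IH V hU hV)] [-> ->] //.
Qed.

Lemma split_first c X : c \in X -> exists X1 X2, X = X1 ++ c :: X2 /\ c \notin X1.
Proof.
elim: X => [|y X IH] //; rewrite in_cons; case: (eqVneq c y) => [<- _|ne /= H].
  by exists [::], X.
have [X1 [X2 [-> h]]] := IH H; exists (y :: X1), X2; split => //.
by rewrite in_cons negb_or ne.
Qed.

Lemma split_last c X : c \in X -> exists X1 X2, X = X1 ++ c :: X2 /\ c \notin X2.
Proof.
elim: X => [|y X IH] // Hin; case H: (c \in X).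
  have [X1 [X2 [-> h]]] := IH H; by exists (y :: X1), X2.
rewrite in_cons H orbF in Hin; move/eqP: Hin => E.
by exists [::], X; rewrite -E H.
Qed.

Lemma exit_edge (S : pred T) x w : S x -> has (predC S) w ->
  exists u v, (u,v) \in edges (x :: w) /\ S u /\ ~~ S v.
Proof.
elim: w x => [|y w IH] x //= Sx /orP[nSy|Hw].
  by exists x, y; rewrite edges_cons2 mem_head.
case Sy: (S y).
  have [u [v [H1 H2]]] := IH y Sy Hw; exists u, v; split => //.
  by rewrite edges_cons2 in_cons H1 orbT.
by exists x, y; rewrite edges_cons2 mem_head Sy.
Qed.

End Basics.


Section B.
Variable T : eqType.
Implicit Types (s t w X Y Z P Q R M : seq T) (a b c d x y z : T).

Lemma catl_inj P U V : P ++ U = P ++ V -> U = V.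
Proof. by elim: P => [|x P IH] //= [/IH]. Qed.

Lemma catr_inj P U V : U ++ P = V ++ P -> U = V.
Proof.
move=> E; have Hs : size U = size V.
  by have := congr1 size E; rewrite !size_cat => /eqP; rewrite eqn_add2r => /eqP.
by move/eqP: E; rewrite eqseq_cat // => /andP[/eqP].
Qed.

Lemma swapA c X d Y Z : perm_eq (edges (c :: X ++ d :: Y ++ c :: Z ++ [:: d]))
                                (edges (c :: Z ++ d :: Y ++ c :: X ++ [:: d])).
Proof.
have H : forall U V, edges (c :: U ++ d :: Y ++ c :: V ++ [:: d]) =
  edges (c :: U ++ [:: d]) ++ edges (d :: Y ++ [:: c]) ++ edges (c :: V ++ [:: d]).
  move=> U V; rewrite (edges_split (c :: U) d) (edges_split (d :: Y) c) //.
rewrite !H perm_catC -catA perm_catCA //.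
Qed.

Lemma swapB c X Z : perm_eq (edges (c :: X ++ c :: Z ++ [:: c]))
                            (edges (c :: Z ++ c :: X ++ [:: c])).
Proof.
have H : forall U V, edges (c :: U ++ c :: V ++ [:: c]) =
  edges (c :: U ++ [:: c]) ++ edges (c :: V ++ [:: c]).
  by move=> U V; rewrite (edges_split (c :: U) c) (edges_split (c :: V) c) edges1 cats0.
by rewrite !H perm_catC.
Qed.

Lemma notL_swap x w w' : perm_eq (edges (x :: w')) (edges (x :: w)) -> w' <> w ->
  ~ inL (x :: w).
Proof. by move=> H ne /inL_cons U; apply: ne; apply: U. Qed.

Lemma notL_A c X d Y Z :
  Z ++ d :: Y ++ c :: X ++ [:: d] <> X ++ d :: Y ++ c :: Z ++ [:: d] ->
  ~ inL (c :: X ++ d :: Y ++ c :: Z ++ [:: d]).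
Proof. by move=> ne; apply: notL_swap ne; rewrite perm_sym swapA. Qed.

Lemma notL_B c X Z :
  Z ++ c :: X ++ [:: c] <> X ++ c :: Z ++ [:: c] ->
  ~ inL (c :: X ++ c :: Z ++ [:: c]).
Proof. by move=> ne; apply: notL_swap ne; rewrite perm_sym swapB. Qed.

Lemma repl p h s w q : perm_eq (edges (h :: s)) (edges (h :: w)) ->
  perm_eq (edges (p ++ h :: s ++ q)) (edges (p ++ h :: w ++ q)).
Proof.
move=> H; have [_ El] := permS H.
rewrite (edges_split p h (s ++ q)) (edges_split p h (w ++ q)) perm_cat2l !edges_app El perm_cat2r //.
Qed.

Lemma inL_infix (w u : seq T) : infix w u -> inL u -> inL w.
Proof.
case: w => [|h w']; first by left.
move=> /infixP [p [q ->]] Hx; apply/inL_cons => s' Hs.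
have Hr := repl p q Hs.
have Hsz : size s' = size w' by have [/perm_size] := permS Hs.
suff E : p ++ h :: s' ++ q = p ++ h :: w' ++ q.
  by move/catl_inj: E => [/catr_inj].
case: p Hx Hr => [|x0 p] Hx Hr.
- by move/inL_cons: Hx => U; rewrite /= (U _ Hr).
- rewrite !cat_cons in Hx Hr *; move/inL_cons: Hx => U; by rewrite (U _ Hr).
Qed.

Lemma filter_none (S : eqType) (P : pred S) l : (forall e, e \in l -> ~~ P e) -> filter P l = [::].
Proof.
elim: l => [|e l IH] //= H; rewrite (negbTE (H e (mem_head _ _))) IH // => e' He'.
by apply: H; rewrite in_cons He' orbT.
Qed.

Lemma filter_every (S : eqType) (P : pred S) l : (forall e, e \in l -> P e) -> filter P l = l.
Proof.
elim: l => [|e l IH] //= H; rewrite (H e (mem_head _ _)) IH // => e' He'.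
by apply: H; rewrite in_cons He' orbT.
Qed.

Lemma exit_edge' (S : pred T) x w : S x -> has (predC S) (x :: w) ->
  exists u v, (u,v) \in edges (x :: w) /\ S u /\ ~~ S v.
Proof. by move=> Sx /= /orP[/negP[]|H] //; apply: exit_edge. Qed.

Lemma split_pred (A : pred T) s : exists s1 s2, s = s1 ++ s2 /\ all A s1 /\
  (forall y s3, s2 = y :: s3 -> ~~ A y).
Proof.
elim: s => [|x s [s1 [s2 [E [H1 H2]]]]]; first by exists [::], [::].
case Ax: (A x).
  by exists (x :: s1), s2; rewrite E /= Ax H1.
exists [::], (x :: s); split; first by []. split; first by [].
by move=> y s3 [<- _]; rewrite Ax.
Qed.

Lemma inL_cat (u1 u2 : seq T) : inL u1 -> inL u2 -> (forall g, g \in u1 -> g \notin u2) ->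
  inL (u1 ++ u2).
Proof.
case: u1 => [|h v1] //; case: u2 => [|k v2]; first by rewrite cats0.
move=> /inL_cons L1 /inL_cons L2 D; rewrite cat_cons; apply/inL_cons => s' Hs.
have [Hp _] := permS Hs.
have mems : forall g, g \in h :: s' -> (g \in h :: v1) || (g \in k :: v2).
  move=> g; rewrite in_cons => /orP[/eqP->|]; first by rewrite mem_head.
  rewrite (perm_mem Hp) mem_cat !in_cons => /orP[->|->]; rewrite ?orbT //.
have [s1 [s2 [Es [A1 A2]]]] := split_pred (mem (h :: v1)) s'.
have Eu : edges (h :: v1 ++ k :: v2) =
   edges (h :: v1) ++ (last h v1, k) :: edges (k :: v2).
  by rewrite (edges_split (h :: v1) k) edges_app edges_cons2 -catA.
have inu1 : forall e, e \in edges (h :: v1) -> (e.1 \in h :: v1) && (e.2 \in h :: v1).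
  by case=> p q /mem_edges [-> ->].
have inu2 : forall e, e \in edges (k :: v2) -> (e.1 \in k :: v2) && (e.2 \in k :: v2).
  by case=> p q /mem_edges [-> ->].
have lu1 : last h v1 \in h :: v1 by rewrite lastI mem_rcons mem_head.
have ku2 : k \in k :: v2 by rewrite mem_head.
have hu1 : h \in h :: v1 by rewrite mem_head.
case: s2 Es A2 => [|y s3] Es A2.
  have : k \in h :: s' by rewrite in_cons (perm_mem Hp) mem_cat mem_head !orbT.
  rewrite Es cats0 in_cons => /orP[/eqP Ek|Hk].
    by have := D h hu1; rewrite -Ek ku2.
  by have := D k (allP A1 k Hk); rewrite ku2.
have nAy : (y \in h :: v1) = false by exact: (negbTE (A2 y s3 erefl)).
have yu2 : y \in k :: v2.
  have := mems y; rewrite Es in_cons mem_cat mem_head !orbT => /(_ isT).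
  by rewrite nAy.
have allB : all (mem (k :: v2)) (y :: s3).
  apply/negPn/negP; rewrite -has_predC => Hh.
  have [p [q [Hpq [Bp nBq]]]] := exit_edge' (S := mem (k :: v2)) yu2 Hh.
  have {}Bp : p \in k :: v2 by exact: Bp.
  have {}nBq : q \notin k :: v2 by exact: nBq.
  have : (p, q) \in edges (h :: v1 ++ k :: v2).
    by rewrite -(perm_mem Hs) Es -cat_cons; apply: edges_sub_suffix.
  rewrite Eu mem_cat in_cons => /orP[/inu1/andP[Hp1 _]|/orP[/eqP[Ep _]|/inu2/andP[_ Hq]]].
  - by have := D p Hp1; rewrite Bp.
  - by have := D p; rewrite Ep lu1 -Ep Bp => /(_ isT).
  - by rewrite Hq in nBq.
have Es2 : edges (h :: s') = edges (h :: s1) ++ (last h s1, y) :: edges (y :: s3).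
  by rewrite Es (edges_split (h :: s1) y) edges_app edges_cons2 -catA.
have ins1 : forall e, e \in edges (h :: s1) -> (e.1 \in h :: v1) && (e.2 \in h :: v1).
  case=> p q /mem_edges [H1 H2] /=.
  have All : all (mem (h :: v1)) (h :: s1) by rewrite /= hu1 A1.
  by apply/andP; split; [exact: (allP All p H1)|exact: (allP All q H2)].
have ins3 : forall e, e \in edges (y :: s3) -> (e.1 \in k :: v2) && (e.2 \in k :: v2).
  case=> p q /mem_edges [H1 H2] /=.
  by apply/andP; split; [exact: (allP allB p H1)|exact: (allP allB q H2)].
have ls1 : last h s1 \in h :: v1.
  have All : all (mem (h :: v1)) (h :: s1) by rewrite /= hu1 A1.
  by apply: (allP All); rewrite lastI mem_rcons mem_head.
have nin2 : forall g, g \in h :: v1 -> (g \in k :: v2) = false.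
  by move=> g /D /negbTE.
have nin1 : forall g, g \in k :: v2 -> (g \in h :: v1) = false.
  by move=> g Hg; apply/negP => /D; rewrite Hg.
pose P1 := fun e : T * T => (e.1 \in h :: v1) && (e.2 \in h :: v1).
pose P2 := fun e : T * T => (e.1 \in k :: v2) && (e.2 \in k :: v2).
pose P3 := fun e : T * T => (e.1 \in h :: v1) && (e.2 \in k :: v2).
have F1 := perm_filter P1 Hs; have F2 := perm_filter P2 Hs; have F3 := perm_filter P3 Hs.
rewrite Es2 Eu !filter_cat /= in F1 F2 F3.
have e11 : filter P1 (edges (h :: s1)) = edges (h :: s1) by apply: filter_every => e /ins1.
have e12 : filter P1 (edges (y :: s3)) = [::].
  by apply: filter_none => e /ins3 /andP[/nin1 H _]; rewrite /P1 H.
have e21 : filter P2 (edges (h :: s1)) = [::].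
  by apply: filter_none => e /ins1 /andP[/nin2 H _]; rewrite /P2 H.
have e22 : filter P2 (edges (y :: s3)) = edges (y :: s3) by apply: filter_every => e /ins3.
have e31 : filter P3 (edges (h :: s1)) = [::].
  by apply: filter_none => e /ins1 /andP[_ /nin2 H]; rewrite /P3 H andbF.
have e32 : filter P3 (edges (y :: s3)) = [::].
  by apply: filter_none => e /ins3 /andP[/nin1 H _]; rewrite /P3 H.
have f11 : filter P1 (edges (h :: v1)) = edges (h :: v1) by apply: filter_every => e /inu1.
have f12 : filter P1 (edges (k :: v2)) = [::].
  by apply: filter_none => e /inu2 /andP[/nin1 H _]; rewrite /P1 H.
have f21 : filter P2 (edges (h :: v1)) = [::].
  by apply: filter_none => e /inu1 /andP[/nin2 H _]; rewrite /P2 H.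
have f22 : filter P2 (edges (k :: v2)) = edges (k :: v2) by apply: filter_every => e /inu2.
have f31 : filter P3 (edges (h :: v1)) = [::].
  by apply: filter_none => e /inu1 /andP[_ /nin2 H]; rewrite /P3 H andbF.
have f32 : filter P3 (edges (k :: v2)) = [::].
  by apply: filter_none => e /inu2 /andP[/nin1 H _]; rewrite /P3 H.
rewrite e11 e12 f11 f12 /P1 /= ls1 lu1 (nin1 _ yu2) (nin1 _ ku2) /= !cats0 in F1.
rewrite e21 e22 f21 f22 /P2 /= (nin2 _ ls1) (nin2 _ lu1) /= in F2.
rewrite e31 e32 f31 f32 /P3 /= ls1 lu1 yu2 ku2 /= in F3.
have Eky : y = k.
  by have := perm_mem F3 (last h s1, y); rewrite mem_head in_cons => /esym/orP[/eqP[_ ->]|].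
subst y.
by rewrite Es (L1 _ F1) (L2 _ F2).
Qed.

End B.


Section C.
Variable T : eqType.
Implicit Types (s t w X Y Z P Q R M : seq T) (a b c d x y z : T).

Lemma edges2 x y : edges [:: x; y] = [:: (x, y)].
Proof. by []. Qed.

Lemma inL_cyc c v : inL v -> c \notin v -> inL (c :: v ++ [:: c]).
Proof.
move=> Lv nc; apply/inL_cons => s' Hs.
have [Hp El] := permS Hs.
rewrite last_cat /= in El.
case: v Lv nc Hs Hp => [|hv v'] Lv nc Hs Hp.
  case: s' Hs Hp El => [|y [|z s']] Hs Hp El; try by have := perm_size Hp.
  by rewrite /= in El; rewrite El.
case: s' Hs Hp El => [|y s''] Hs Hp El; first by have := perm_size Hp.
rewrite cat_cons !edges_cons2 in Hs.
have Hy : (c, y) \in (c, hv) :: edges (hv :: v' ++ [:: c]) by rewrite -(perm_mem Hs) mem_head.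
move: Hy; rewrite in_cons => /orP[/eqP[Ey]|Hy]; last first.
  by have := @edges_src T (hv :: v') c c y Hy; rewrite (negbTE nc).
subst y; rewrite perm_cons in Hs.
case/lastP: s'' Hs Hp El => [|bs l] Hs Hp El.
  by have := perm_size Hp; rewrite /= size_cat /= addn1.
rewrite /= last_rcons in El; subst l.
rewrite -cats1 !edges_app !edges2 in Hs.
have Hl : (last hv bs, c) \in edges (hv :: v') ++ [:: (last hv v', c)].
  by rewrite -(perm_mem Hs) mem_cat mem_head orbT.
move: Hl; rewrite mem_cat => /orP[/edges_tgt Hc|].
  by move: nc; rewrite in_cons Hc orbT.
rewrite inE => /eqP[El].
rewrite El perm_cat2r in Hs.
move/inL_cons: Lv => U.
by rewrite -cats1 (U _ Hs).
Qed.

End C.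


Arguments inL_infix {T w u}.
Section D.
Variable T : eqType.
Implicit Types (s t w X Y Z P Q R M : seq T) (a b c d x y z : T).

Lemma inL1 a : inL [:: a].
Proof. by apply/inL_cons => s Hs; have := perm_size Hs; rewrite !size_edges /=; case: s Hs. Qed.

Lemma inL0 : inL ([::] : seq T).
Proof. by left. Qed.

Lemma proper_infix u x r : infix u (x :: r) -> u <> x :: r ->
  infix u r \/ infix u (belast x r).
Proof.
move=> /infixP [[|y p] [q E]] ne.
- right; case/lastP: q E => [|q l] E; first by rewrite cats0 /= in E; rewrite E in ne.
  rewrite lastI /= in E.
  have : rcons (belast x r) (last x r) = rcons (u ++ q) l by rewrite E rcons_cat.
  move/rcons_inj => [-> _]; exact: infix_catr (infix_refl u).
- left; case: E => _ ->; apply/infixP; by exists p, q.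
Qed.

Lemma disj_mem (x y : seq T) g : disj x y -> g \in x -> g \in y -> False.
Proof. by move=> D /D /negP. Qed.

Lemma disj_r (x y : seq T) g : disj x y -> g \in y -> g \notin x.
Proof. by move=> D Hy; apply/negP => /D; rewrite Hy. Qed.

Lemma notin_neq (x : seq T) a g : a \notin x -> g \in x -> g != a.
Proof. by move=> H Hg; apply/eqP => E; rewrite -E Hg in H. Qed.

Lemma disj_self (x : seq T) : x <> [::] \/ x <> [::] -> disj x x -> False.
Proof.
case: x => [|g x] [] // _ D; by have := D g (mem_head _ _); rewrite mem_head.
Qed.

Lemma L2_MF (r : seq T) : inL2 r -> min_forbidden r.
Proof.
case.
- move=> [a [b [x [y [z [ab [Er [xy [Lx [Ly [Lz [ax [ay [az [bx [by_ [bz [dxy [dxz dyz]]]]]]]]]]]]]]]]]]].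
  split.
  + rewrite Er; apply: notL_A => E.
    have [Exy _] := pre_eq by_ bx E; subst y.
    exact: disj_self xy dxy.
  + move=> u Hu ne; rewrite Er in Hu ne.
    have [H|H] := proper_infix Hu ne; apply: (inL_infix H).
    * have -> : x ++ b :: z ++ a :: y ++ [:: b] = x ++ (b :: (z ++ [:: a] ++ y) ++ [:: b]).
        by rewrite /= -!catA.
      apply: inL_cat => //.
      - apply: inL_cyc; first apply: inL_cat => //; first apply: inL_cat => //.
        + exact: inL1.
        + by move=> g; rewrite inE => /eqP->.
        + by move=> g Hg; rewrite mem_cat inE negb_or (notin_neq az Hg) /=; apply/negP => /(disj_mem dyz)/(_ Hg).
        + by rewrite !mem_cat inE negb_or bz /= negb_or eq_sym; apply/andP; split; [apply/eqP|].
      - move=> g Hg; rewrite !(inE, mem_cat) (negbTE (dxz g Hg)) (negbTE (dxy g Hg)).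
        by rewrite (negbTE (notin_neq bx Hg)) (negbTE (notin_neq ax Hg)).
    * have -> : belast a (x ++ b :: z ++ a :: y ++ [:: b]) = (a :: (x ++ [:: b] ++ z) ++ [:: a]) ++ y.
        have -> : x ++ b :: z ++ a :: y ++ [:: b] = rcons (x ++ b :: z ++ a :: y) b.
          by rewrite -cats1 -!catA /= -!catA.
        by rewrite belast_rcons /= -!catA.
      apply: inL_cat => //.
      - apply: inL_cyc; first apply: inL_cat => //; first apply: inL_cat => //.
        + exact: inL1.
        + by move=> g; rewrite inE => /eqP->.
        + by move=> g Hg; rewrite mem_cat inE negb_or (notin_neq bx Hg) /=; exact: (dxz g Hg).
        + by rewrite !mem_cat inE negb_or ax /= negb_or az andbT; apply/eqP.
      - move=> g Hg; apply/negP => Hy; move: Hg; rewrite !(inE, mem_cat).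
        rewrite (negbTE (notin_neq ay Hy)) (negbTE (notin_neq by_ Hy)).
        by rewrite (negbTE (disj_r dxy Hy)) (negbTE (dyz g Hy)).
- move=> [a [x [y [Er [xy [Lx [Ly [ax [ay dxy]]]]]]]]].
  split.
  + rewrite Er; apply: notL_B => E.
    have [Exy _] := pre_eq ay ax E; subst y.
    exact: disj_self xy dxy.
  + move=> u Hu ne; rewrite Er in Hu ne.
    have [H|H] := proper_infix Hu ne; apply: (inL_infix H).
    * apply: inL_cat => //; first exact: inL_cyc.
      move=> g Hg; rewrite inE mem_cat inE negb_or (notin_neq ax Hg) /= negb_or.
      by rewrite (notin_neq ax Hg) andbT; exact: (dxy g Hg).
    * have -> : belast a (x ++ a :: y ++ [:: a]) = (a :: x ++ [:: a]) ++ y.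
        have -> : x ++ a :: y ++ [:: a] = rcons (x ++ a :: y) a.
          by rewrite -cats1 -!catA.
        by rewrite belast_rcons /= -!catA.
      apply: inL_cat => //; first exact: inL_cyc.
      move=> g; rewrite inE mem_cat inE => /orP[/eqP->//|/orP[Hg|/eqP->//]].
      exact: (dxy g Hg).
Qed.

End D.


Lemma catA_r (T : Type) (s1 s2 s3 : seq T) : (s1 ++ s2) ++ s3 = s1 ++ s2 ++ s3.
Proof. by rewrite catA. Qed.
Ltac sn := rewrite ?(cat_cons, cat0s, cats0, catA_r).

Section E.
Variable T : eqType.
Implicit Types (s w X Y Z P Q R M : seq T) (a b c d x y z : T).

Lemma E4 a X v : a \notin X -> (a, v) \in edges (a :: X ++ [:: a]) -> v = head a X.
Proof.
case: X => [|x0 X] /= na; first by rewrite inE => /eqP[].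
rewrite edges_cons2 in_cons => /orP[/eqP[]//|H].
by have := @edges_src T (x0 :: X) a a v H; rewrite (negbTE na).
Qed.

Lemma head_split c X1 X2 a : head a (X1 ++ c :: X2) = head c X1.
Proof. by case: X1. Qed.

Lemma neq_size (U V : seq T) : size U <> size V -> U <> V.
Proof. by move=> H E; apply: H; rewrite E. Qed.

Variable t : seq T.
Hypothesis hMF : forall u, infix u t -> u <> t -> inL u.

Lemma forced F : infix F t -> ~ inL F -> F = t.
Proof. by move=> Hi nL; case: (eqVneq F t) => // /eqP ne; case: nL; apply: hMF. Qed.

Lemma forced3 p F q : t = p ++ F ++ q -> ~ inL F -> p = [::] /\ q = [::].
Proof.
move=> Et nL; have := forced (F := F); rewrite {1}Et => /(_ (infix_infix _ _ _) nL) E.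
have := congr1 size E; rewrite Et !size_cat => Hs.
by split; apply/eqP; rewrite -size_eq0; apply/eqP; lia.
Qed.

Lemma part_inL p u q : t = p ++ u ++ q -> 0 < size p + size q -> inL u.
Proof.
move=> Et Hs; apply: hMF; first by rewrite Et; apply: infix_infix.
by apply: neq_size; rewrite Et !size_cat; lia.
Qed.

Lemma seg a (ht : ohead t = Some a) n : forall M X R, size M < n ->
  t = M ++ a :: X ++ a :: R -> a \notin X -> R <> [::] ->
  (forall v, (a, v) \in edges (M ++ a :: X ++ [:: a]) -> v = head a X) /\
  (forall g, g \in M -> g = a \/ g \in X).
Proof.
elim: n => [|n IH] M X R //= Hn Et aX nR.
case: M Hn Et => [|m0 M0] Hn Et.
  by split => [v|g] //; exact: E4 aX.
have am : a \in m0 :: M0 by rewrite Et /= in ht; case: ht => ->; rewrite mem_head.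
have [M' [Y [EM aY]]] := split_last am.
rewrite EM in Hn Et *.
have EF : t = M' ++ (a :: Y ++ a :: X ++ [:: a]) ++ R.
  by rewrite Et; sn.
have EYX : Y = X.
  case: (eqVneq Y X) => // /eqP ne; exfalso.
  have nL : ~ inL (a :: Y ++ a :: X ++ [:: a]).
    by apply: notL_B => E; have [E1 _] := pre_eq aX aY E; apply: ne.
  by have [_ E2] := forced3 EF nL; apply: nR.
subst Y.
have Et' : t = M' ++ a :: X ++ a :: (X ++ a :: R).
  by rewrite Et; sn.
have hM' : size M' < n by move: Hn; rewrite size_cat /=; lia.
have nR' : X ++ a :: R <> [::] by move/(congr1 size); rewrite size_cat /=; lia.
have [IH1 IH2] := IH M' X (X ++ a :: R) hM' Et' aX nR'.
split.
  move=> v; rewrite (edges_split (M' ++ a :: X) a) mem_cat; sn.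
  by case/orP => [/IH1|/(E4 aX)].
move=> g; rewrite mem_cat in_cons => /orP[/IH2 //|/orP[/eqP->|]]; [by left|by right].
Qed.

End E.



Section F.
Variable T : eqType.
Implicit Types (s w X Y Z P Q R M : seq T) (a b c d x y z : T).
Variable t : seq T.
Hypothesis hMF : forall u, infix u t -> u <> t -> inL u.
Hypothesis hn : ~ inL t.

Lemma head_cat1 a X : head a (X ++ [:: a]) = head a X.
Proof. by case: X. Qed.

Lemma edges_split2 M a X R :
  edges (M ++ a :: X ++ a :: R) = edges (M ++ a :: X ++ [:: a]) ++ edges (a :: R).
Proof. by have := edges_split (M ++ a :: X) a R; rewrite -!catA. Qed.

Lemma nin_split a U g V : a \notin U ++ g :: V -> [/\ a \notin U, a != g & a \notin V].
Proof. by rewrite mem_cat in_cons !negb_or => /and3P[]. Qed.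

Lemma cat1_nil U (g : T) : U ++ [:: g] <> [::].
Proof. by case: U. Qed.

Lemma no_self_cat U (g : T) V : V = U ++ g :: V -> False.
Proof. by move/(congr1 size); rewrite size_cat /=; lia. Qed.

Lemma mf_core : inL2 t.
Proof.
case Et0: t => [|a t']; first by case: hn; rewrite Et0; left.
rewrite -Et0; have hn' := hn; rewrite Et0 in hn'.
have [s' [Hs ne]] : exists s', perm_eq (edges (a :: s')) (edges (a :: t')) /\ s' <> t'.
  apply: NNPP => H; apply: hn'; apply/inL_cons => s' Hs; apply: NNPP => ne; apply: H.
  by exists s'.
case: t' Et0 Hs ne {hn'} => [|d t2] Et0 Hs ne.
  by have := perm_size Hs; rewrite !size_edges /=; case: s' Hs ne.
case: s' Hs ne => [|e s2] Hs ne; first by have := perm_size Hs; rewrite !size_edges.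
have ed : e != d.
  apply/eqP => Eed; subst e; apply: ne.
  have Lt' : inL (d :: t2).
    by apply: (part_inL hMF (p := [:: a]) (q := [::])); rewrite ?Et0 ?cats0.
  by move/inL_cons: Lt' => U; rewrite !edges_cons2 perm_cons in Hs; rewrite (U _ Hs).
have Hae : (a, e) \in edges t by rewrite Et0 -(perm_mem Hs) edges_cons2 mem_head.
have Had : (a, d) \in edges t by rewrite Et0 edges_cons2 mem_head.
have ht : ohead t = Some a by rewrite Et0.
have aint : a \in t by rewrite Et0 mem_head.
have [M [Tl [Et aTl]]] := split_last aint.
case: M Et => [|m0 M0] Et.
  move: Hae; rewrite Et0 edges_cons2 in_cons => /orP[/eqP[Ee]|/mem_edges[Ha _]].
    by rewrite Ee eqxx in ed.
  by move: Et; rewrite Et0 /= => [[Etl]]; rewrite -Etl Ha in aTl.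
have am : a \in m0 :: M0 by move: ht; rewrite Et /= => [[->]]; rewrite mem_head.
have [M1 [X [EM aX]]] := split_last am.
have Et1 : t = M1 ++ a :: X ++ a :: Tl by rewrite Et EM; sn.
clear Et EM am m0 M0.
case: Tl Et1 aTl => [|e0 Tl'] Et1 aTl.
- case: M1 Et1 => [|m1 M1'] Et1.
    have Ee : e = head a X by move: Hae; rewrite Et1 => /(E4 aX).
    have Ed : d = head a X.
      by move: Et1; rewrite Et0 => [[E1]]; rewrite -head_cat1 -E1.
    by rewrite Ee Ed eqxx in ed.
  have am : a \in m1 :: M1' by move: ht; rewrite Et1 /= => [[->]]; rewrite mem_head.
  have [M2 [Y [EM aY]]] := split_last am.
  have Et2 : t = M2 ++ a :: Y ++ a :: X ++ [:: a] by rewrite Et1 EM; sn.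
  clear Et1 EM am m1 M1'.
  case: (eqVneq Y X) => [EYX|nYX].
    subst Y.
    have Et3 : t = M2 ++ a :: X ++ a :: (X ++ [:: a]) by rewrite Et2.
    have nR : X ++ [:: a] <> [::] by move/(congr1 size); rewrite size_cat /=; lia.
    have [S1 _] := seg hMF ht (ltnSn (size M2)) Et3 aX nR.
    have EdT : edges t = edges (M2 ++ a :: X ++ [:: a]) ++ edges (a :: X ++ [:: a]).
      by rewrite Et2 edges_split2.
    move: Hae Had; rewrite EdT !mem_cat => /orP[/S1|/(E4 aX)] Ee /orP[/S1|/(E4 aX)] Edd;
      by rewrite Ee Edd eqxx in ed.
  have nL : ~ inL (a :: Y ++ a :: X ++ [:: a]).
    apply: notL_B => E; have [E1 _] := pre_eq aX aY E.
    by rewrite E1 eqxx in nYX.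
  have Et3 : t = M2 ++ (a :: Y ++ a :: X ++ [:: a]) ++ [::] by rewrite cats0.
  have [EM2 _] := forced3 hMF Et3 nL; subst M2.
  right; exists a, Y, X.
  have Et4 : t = a :: Y ++ a :: X ++ [:: a] by rewrite Et2.
  split => //; split.
    apply: NNPP => /not_or_and [/NNPP EY /NNPP EX]; by rewrite EY EX eqxx in nYX.
  split; first by apply: (part_inL hMF (p := [:: a]) (q := a :: X ++ [:: a])); rewrite ?Et4.
  split; first by apply: (part_inL hMF (p := a :: Y ++ [:: a]) (q := [:: a]));
    rewrite ?Et4 ?size_cat //; sn.
  do 2 (split => //).
  move=> g gY; apply/negP => gX.
  have ga := notin_neq aY gY.
  have [Y1 [Y2 [EY gY1]]] := split_first gY.
  have [X1 [X2 [EX gX1]]] := split_first gX.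
  have [aY1 _ aY2] : [/\ a \notin Y1, a != g & a \notin Y2] by apply: nin_split; rewrite -EY.
  have [aX1 _ aX2] : [/\ a \notin X1, a != g & a \notin X2] by apply: nin_split; rewrite -EX.
  case: (eqVneq Y1 X1) => [E11|n11].
    subst X1.
    have n22 : Y2 <> X2 by move=> E22; rewrite EY EX E22 eqxx in nYX.
    have nL2 : ~ inL (g :: Y2 ++ a :: Y1 ++ g :: X2 ++ [:: a]).
      apply: notL_A => E; have [E1 _] := pre_eq aX2 aY2 E; exact: n22 (esym E1).
    have EF : t = (a :: Y1) ++ (g :: Y2 ++ a :: Y1 ++ g :: X2 ++ [:: a]) ++ [::].
      by rewrite Et4 EY EX; sn.
    by have [] := forced3 hMF EF nL2.
  have nL2 : ~ inL (a :: Y1 ++ g :: Y2 ++ a :: X1 ++ [:: g]).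
    apply: notL_A => E; have [E1 _] := pre_eq gX1 gY1 E; by rewrite E1 eqxx in n11.
  have EF : t = [::] ++ (a :: Y1 ++ g :: Y2 ++ a :: X1 ++ [:: g]) ++ (X2 ++ [:: a]).
    by rewrite Et4 EY EX; sn.
  by have [_ /eqP] := forced3 hMF EF nL2; rewrite -size_eq0 size_cat addn1.
- have nR : e0 :: Tl' <> [::] by [].
  have [S1 S2] := seg hMF ht (ltnSn (size M1)) Et1 aX nR.
  have EdT : edges t = edges (M1 ++ a :: X ++ [:: a]) ++ edges (a :: e0 :: Tl').
    by rewrite Et1 edges_split2.
  have Ed : d = head a X.
    apply: S1.
    have Hsz : 0 < size (edges (M1 ++ a :: X ++ [:: a])).
      by rewrite size_edges size_cat /= size_cat /=; lia.
    move: EdT; rewrite Et0 edges_cons2.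
    by case: (edges (M1 ++ a :: X ++ [:: a])) Hsz => [|p0 pl] //= _ [<- _]; exact: mem_head.
  have Ee0 : e = e0.
    move: Hae; rewrite EdT mem_cat edges_cons2 in_cons.
    case/orP => [/S1 Ee|/orP[/eqP[->]//|/mem_edges[Ha _]]].
    - by rewrite Ee -Ed eqxx in ed.
    - by rewrite Ha in aTl.
  subst e0.
  have Ha_s : a \in e :: s2.
    have : (a, d) \in edges (a :: e :: s2) by rewrite (perm_mem Hs) edges_cons2 mem_head.
    rewrite edges_cons2 in_cons => /orP[/eqP[Ede]|/mem_edges[]//].
    by rewrite Ede eqxx in ed.
  have eTl : e \in e :: Tl' := mem_head _ _.
  have hasn : has (predC (mem (e :: Tl'))) (e :: s2).
    by apply/hasP; exists a => //=.
  have [u [v [Huv [Su nSv]]]] := exit_edge' (S := mem (e :: Tl')) eTl hasn.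
  have {}Su : u \in e :: Tl' by exact: Su.
  have {}nSv : v \notin e :: Tl' by exact: nSv.
  have Huvt : (u, v) \in edges t.
    by rewrite Et0 -(perm_mem Hs) edges_cons2 in_cons Huv orbT.
  have ua : u != a := notin_neq aTl Su.
  have uX : u \in X.
    move: Huvt; rewrite EdT mem_cat edges_cons2 in_cons.
    case/orP => [H|/orP[/eqP[Eu _]|/mem_edges[_ Hv]]].
    - rewrite -cat_cons catA in H.
      have := @edges_src T (M1 ++ a :: X) a u v H.
      rewrite mem_cat in_cons => /orP[/S2[Eu|//]|/orP[/eqP Eu|//]];
        by rewrite Eu eqxx in ua.
    - by rewrite Eu eqxx in ua.
    - by rewrite Hv in nSv.
  have [X1 [X2 [EX uX1]]] := split_first uX.
  have [T1 [T2 [ET uT1]]] := split_first Su.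
  have Ed' : d = head u X1 by rewrite Ed EX head_split.
  have Ee' : e = head u T1 by have := congr1 (head a) ET; rewrite head_split.
  have n1 : X1 != T1 by apply/eqP => E; rewrite Ed' Ee' E eqxx in ed.
  have [aX1 _ aX2] : [/\ a \notin X1, a != u & a \notin X2] by apply: nin_split; rewrite -EX.
  have [aT1 _ aT2] : [/\ a \notin T1, a != u & a \notin T2] by apply: nin_split; rewrite -ET.
  have nLF : ~ inL (a :: X1 ++ u :: X2 ++ a :: T1 ++ [:: u]).
    apply: notL_A => E; have [E1 _] := pre_eq uT1 uX1 E; by rewrite E1 eqxx in n1.
  have EF : t = M1 ++ (a :: X1 ++ u :: X2 ++ a :: T1 ++ [:: u]) ++ T2.
    by rewrite Et1 ET EX; sn.
  have [EM1 ET2] := forced3 hMF EF nLF; subst M1 T2.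
  have Et5 : t = a :: X1 ++ u :: X2 ++ a :: T1 ++ [:: u] by rewrite EF; sn.
  clear EF Et1 S1 S2 EdT.
  have uX2 : u \notin X2.
    apply/negP => H; have [U [V [EX2 uU]]] := split_first H.
    have [aU _ aV] : [/\ a \notin U, a != u & a \notin V] by apply: nin_split; rewrite -EX2.
    have nL : ~ inL (u :: U ++ u :: (V ++ a :: T1) ++ [:: u]).
      apply: notL_B => E.
      have E' : V ++ a :: (T1 ++ u :: U ++ [:: u]) = (U ++ u :: V) ++ a :: (T1 ++ [:: u]).
        by move: E; sn.
      have aUV : a \notin U ++ u :: V by rewrite mem_cat in_cons !negb_or aU aV eq_sym ua.
      have [E1 _] := pre_eq aV aUV E'.
      exact: no_self_cat E1.
    have EF : t = (a :: X1) ++ (u :: U ++ u :: (V ++ a :: T1) ++ [:: u]) ++ [::].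
      by rewrite Et5 EX2; sn.
    by have [] := forced3 hMF EF nL.
  left; exists a, u, X1, T1, X2.
  split; first by move=> E; rewrite E eqxx in ua.
  split; first exact: Et5.
  split.
    apply: NNPP => /not_or_and [/NNPP E1 /NNPP E2]; by rewrite E1 E2 eqxx in n1.
  split; first by apply: (part_inL hMF (p := [:: a]) (q := u :: X2 ++ a :: T1 ++ [:: u])).
  split; first by apply: (part_inL hMF (p := a :: X1 ++ u :: X2 ++ [:: a]) (q := [:: u]));
    rewrite ?size_cat //; rewrite Et5; sn.
  split; first by apply: (part_inL hMF (p := a :: X1 ++ [:: u]) (q := a :: T1 ++ [:: u]));
    rewrite ?size_cat //; rewrite Et5; sn.
  do 6 (split => //).
  have au : a != u by rewrite eq_sym.
  split.
    move=> g gX1; apply/negP => gT1.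
    have ga := notin_neq aX1 gX1.
    have gu := notin_neq uX1 gX1.
    have [P1 [P1' [EX1 gP1]]] := split_first gX1.
    have [Q1 [Q1' [ET1 gQ1]]] := split_first gT1.
    have [uP1 _ uP1'] : [/\ u \notin P1, u != g & u \notin P1'] by apply: nin_split; rewrite -EX1.
    have [uQ1 _ uQ1'] : [/\ u \notin Q1, u != g & u \notin Q1'] by apply: nin_split; rewrite -ET1.
    case: (eqVneq P1 Q1) => [EPQ|nPQ].
      subst Q1.
      have n2 : P1' <> Q1' by move=> E; rewrite EX1 ET1 E eqxx in n1.
      have nL : ~ inL (g :: P1' ++ u :: (X2 ++ a :: P1) ++ g :: Q1' ++ [:: u]).
        apply: notL_A => E; have [E1 _] := pre_eq uQ1' uP1' E; exact: n2 (esym E1).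
      have EF : t = (a :: P1) ++ (g :: P1' ++ u :: (X2 ++ a :: P1) ++ g :: Q1' ++ [:: u]) ++ [::].
        by rewrite Et5 EX1 ET1; sn.
      by have [] := forced3 hMF EF nL.
    have nL : ~ inL (a :: P1 ++ g :: (P1' ++ u :: X2) ++ a :: Q1 ++ [:: g]).
      apply: notL_A => E; have [E1 _] := pre_eq gQ1 gP1 E; by rewrite E1 eqxx in nPQ.
    have EF : t = [::] ++ (a :: P1 ++ g :: (P1' ++ u :: X2) ++ a :: Q1 ++ [:: g]) ++ (Q1' ++ [:: u]).
      by rewrite Et5 EX1 ET1; sn.
    by have [_ /cat1_nil] := forced3 hMF EF nL.
  split.
    move=> g gX1; apply/negP => gX2.
    have ga := notin_neq aX1 gX1.
    have ag : a != g by rewrite eq_sym.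
    have [P [P' [EX1 _]]] := split_first gX1.
    have [Q [Q' [EX2 _]]] := split_first gX2.
    have [aP _ aP'] : [/\ a \notin P, a != g & a \notin P'] by apply: nin_split; rewrite -EX1.
    have [aQ _ aQ'] : [/\ a \notin Q, a != g & a \notin Q'] by apply: nin_split; rewrite -EX2.
    have nL : ~ inL (g :: P' ++ u :: Q ++ g :: (Q' ++ a :: T1) ++ [:: u]).
      apply: notL_A => E.
      have E' : Q' ++ a :: (T1 ++ u :: Q ++ g :: P' ++ [:: u]) =
                (P' ++ u :: Q ++ g :: Q') ++ a :: (T1 ++ [:: u]) by move: E; sn.
      have aM : a \notin P' ++ u :: Q ++ g :: Q'.
        by rewrite !(mem_cat, in_cons) !negb_or aP' aQ aQ' au ag.
      have [E1 _] := pre_eq aQ' aM E'.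
      by apply: (@no_self_cat (P' ++ u :: Q) g Q'); rewrite {1}E1; sn.
    have EF : t = (a :: P) ++ (g :: P' ++ u :: Q ++ g :: (Q' ++ a :: T1) ++ [:: u]) ++ [::].
      by rewrite Et5 EX1 EX2; sn.
    by have [] := forced3 hMF EF nL.
  move=> g gT1; apply/negP => gX2.
  have gu := notin_neq uX2 gX2.
  have ug : u != g by rewrite eq_sym.
  have [Q [Q' [ET1 _]]] := split_first gT1.
  have [P [P' [EX2 _]]] := split_first gX2.
  have [uQ _ uQ'] : [/\ u \notin Q, u != g & u \notin Q'] by apply: nin_split; rewrite -ET1.
  have [uP _ uP'] : [/\ u \notin P, u != g & u \notin P'] by apply: nin_split; rewrite -EX2.
  have nL : ~ inL (a :: (X1 ++ u :: P) ++ g :: P' ++ a :: Q ++ [:: g]).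
    apply: notL_A => E.
    have E' : (Q ++ g :: P' ++ a :: X1) ++ u :: (P ++ [:: g]) =
              X1 ++ u :: (P ++ g :: P' ++ a :: Q ++ [:: g]) by move: E; sn.
    have uM : u \notin Q ++ g :: P' ++ a :: X1.
      by rewrite !(mem_cat, in_cons) !negb_or uQ uP' uX1 ug ua.
    have [E1 _] := pre_eq uM uX1 E'.
    by apply: (@no_self_cat (Q ++ g :: P') a X1); rewrite -{1}E1; sn.
  have EF : t = [::] ++ (a :: (X1 ++ u :: P) ++ g :: P' ++ a :: Q ++ [:: g]) ++ (Q' ++ [:: u]).
    by rewrite Et5 ET1 EX2; sn.
  by have [_ /cat1_nil] := forced3 hMF EF nL.
Qed.

End F.

Theorem theorem1 (T : finType) (r : seq T) : inL2 r <-> min_forbidden r.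
Proof.
split; first exact: L2_MF.
by move=> [hn hMF]; exact: mf_core hMF hn.
Qed.
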